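(* ${\bf K^\boxplus}$ is sound and strongly complete with respect to the class of serial bimodal frames (those in which both $R_1$ and $R_2$ are serial): for every $\Gamma\subseteq\mathcal{L}(\boxplus)$ and $\phi\in\mathcal{L}(\boxplus)$, $\Gamma\vdash_{{\bf K^\boxplus}}\phi$ iff $\phi$ is true at every state of every serial bimodal model at which all formulas of $\Gamma$ are true.
   Context: Fix a nonempty set $\mathbf{P}$ of propositional variables. A bimodal model is $\langle S,R_1,R_2,V\rangle$ with $S$ nonempty, $R_1,R_2\subseteq S\times S$, $V:\mathbf{P}\to\mathcal{P}(S)$. Write $R_i(s)=\{t\mid sR_it\}$. $\mathcal{L}(\boxplus):\ \phi::=p\mid\neg\phi\mid(\phi\wedge\phi)\mid\boxplus\phi$. Truth: $\mathcal{M},s\vDash\boxplus\phi$ iff ($\mathcal{M},t\vDash\phi$ for all $t\in R_1(s)$) or ($\mathcal{M},u\vDash\neg\phi$ for all $u\in R_2(s)$); atoms and Booleans as usual. ${\bf K^\boxplus}$ has axioms: all instances of propositional tautologies; CON: $\boxplus\phi\wedge\boxplus\psi\to\boxplus(\phi\wedge\psi)\wedge\boxplus(\phi\vee\psi)$; DIS: $\boxplus\phi\to\boxplus(\phi\vee\psi)\vee\boxplus(\phi\wedge\chi)$; and rules: modus ponens; RN: from $\phi$ infer $\boxplus\phi\wedge\boxplus\neg\phi$; RE: from $\phi\leftrightarrow\psi$ infer $\boxplus\phi\leftrightarrow\boxplus\psi$. *)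

(* Defs.v *)
From Stdlib Require Import List.
Import ListNotations.
Set Implicit Arguments.

Section Syntax.
Variable P : Type.

Inductive form : Type :=
| Var : P -> form
| Neg : form -> form
| And : form -> form -> form
| Box : form -> form.

Definition Or (a b : form) : form := Neg (And (Neg a) (Neg b)).
Definition Imp (a b : form) : form := Neg (And a (Neg b)).
Definition Iff (a b : form) : form := And (Imp a b) (Imp b a).

(* Propositional tautologies: true under every boolean assignment to the
   propositional atoms, where atoms are variables and boxed formulas. *)
Fixpoint teval (v : form -> bool) (f : form) : bool :=
  match f with
  | Var _ => v f
  | Neg a => negb (teval v a)
  | And a b => andb (teval v a) (teval v b)
  | Box _ => v f
  end.

Definition tautology (f : form) : Prop := forall v : form -> bool, teval v f = true.

Inductive Thm : form -> Prop :=
| Ax_taut : forall f, tautology f -> Thm f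
| Ax_CON : forall a b,
    Thm (Imp (And (Box a) (Box b)) (And (Box (And a b)) (Box (Or a b))))
| Ax_DIS : forall a b c,
    Thm (Imp (Box a) (Or (Box (Or a b)) (Box (And a c))))
| R_MP : forall a b, Thm (Imp a b) -> Thm a -> Thm b
| R_N : forall a, Thm a -> Thm (And (Box a) (Box (Neg a)))
| R_E : forall a b, Thm (Iff a b) -> Thm (Iff (Box a) (Box b)).

Definition deriv (Gamma : form -> Prop) (f : form) : Prop :=
  exists l : list form, (forall g, In g l -> Gamma g) /\ Thm (fold_right Imp f l).

End Syntax.

Arguments Var {P}.

Record model (P S : Type) : Type := Model {
  R1 : S -> S -> Prop;
  R2 : S -> S -> Prop;
  V : P -> S -> Prop
}.

Fixpoint sat (P S : Type) (M : model P S) (s : S) (f : form P) : Prop :=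
  match f with
  | Var p => V M p s
  | Neg a => ~ sat M s a
  | And a b => sat M s a /\ sat M s b
  | Box a => (forall t, R1 M s t -> sat M t a) \/
             (forall u, R2 M s u -> ~ sat M u a)
  end.

Definition serial (S : Type) (R : S -> S -> Prop) : Prop :=
  forall s, exists t, R s t.

Definition serial_consequence (P : Type) (Gamma : form P -> Prop) (f : form P) : Prop :=
  forall (S : Type) (M : model P S),
    serial (R1 M) -> serial (R2 M) ->
    forall s : S, (forall g, Gamma g -> sat M s g) -> sat M s f.

(* Main.v *)
Require Import Defs.
From Stdlib Require Import List Classical ClassicalEpsilon FunctionalExtensionality PropExtensionality Bool.
Import ListNotations.
Set Implicit Arguments.


Lemma teval_fold {P} (v : form P -> bool) f l :
  teval v (fold_right (@Imp P) f l) = true <->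
  ((forall g, In g l -> teval v g = true) -> teval v f = true).
Proof.
  induction l as [|h l IH]; simpl.
  - split; auto.
  - unfold Imp; simpl. rewrite negb_true_iff, andb_false_iff, negb_false_iff, IH.
    split.
    + intros [H|H] Hall.
      * rewrite (Hall h (or_introl eq_refl)) in H; discriminate.
      * apply H; intros; apply Hall; auto.
    + intros H. destruct (teval v h) eqn:E; [right|left; reflexivity].
      intros Hl. apply H. intros g [<-|Hg]; auto.
Qed.

Lemma thm_fold {P} (hs : list (form P)) b :
  (forall h, In h hs -> Thm h) -> Thm (fold_right (@Imp P) b hs) -> Thm b.
Proof.
  induction hs as [|h hs IH]; simpl; auto.
  intros Hh Hf. apply IH; [intros; apply Hh; auto|].
  apply (R_MP Hf). apply Hh; auto.
Qed.

Lemma thm_taut1 {P} (a b : form P) :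
  Thm a -> (forall v, teval v a = true -> teval v b = true) -> Thm b.
Proof.
  intros Ha H. apply (@thm_fold P [a] b); [intros h [<-|[]]; auto|].
  apply Ax_taut. intros v. apply teval_fold. intros Hall. apply H, Hall; simpl; auto.
Qed.

Lemma thm_taut2 {P} (a b c : form P) :
  Thm a -> Thm b -> (forall v, teval v a = true -> teval v b = true -> teval v c = true) -> Thm c.
Proof.
  intros Ha Hb H. apply (@thm_fold P [a;b] c); [intros h [<-|[<-|[]]]; auto|].
  apply Ax_taut. intros v. apply teval_fold. intros Hall. apply H; apply Hall; simpl; auto.
Qed.

Lemma in_app_sub {A} (X : A -> Prop) l1 l2 :
  (forall g, In g l1 -> X g) -> (forall g, In g l2 -> X g) -> forall g, In g (l1 ++ l2) -> X g.
Proof. intros H1 H2 g Hg. apply in_app_or in Hg. destruct Hg; auto. Qed.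

Lemma deriv_thm {P} (X : form P -> Prop) f : Thm f -> deriv X f.
Proof. intros H. exists []. split; simpl; auto. intros g []. Qed.

Lemma deriv_in {P} (X : form P -> Prop) f : X f -> deriv X f.
Proof.
  intros H. exists [f]. split. intros g [<-|[]]; auto.
  apply Ax_taut. intros v. apply teval_fold. intros Hall. apply Hall; simpl; auto.
Qed.

Lemma deriv_taut2 {P} (X : form P -> Prop) (a b c : form P) :
  deriv X a -> deriv X b ->
  (forall v, teval v a = true -> teval v b = true -> teval v c = true) -> deriv X c.
Proof.
  intros [l1 [H1 T1]] [l2 [H2 T2]] H. exists (l1 ++ l2). split; [apply in_app_sub; auto|].
  eapply thm_taut2; [exact T1|exact T2|]. intros v Ha Hb. apply teval_fold. intros Hall.
  rewrite teval_fold in Ha, Hb. apply H; [apply Ha|apply Hb]; intros g Hg; apply Hall;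
  apply in_or_app; auto.
Qed.

Lemma deriv_taut1 {P} (X : form P -> Prop) (a c : form P) :
  deriv X a -> (forall v, teval v a = true -> teval v c = true) -> deriv X c.
Proof. intros Ha H. eapply deriv_taut2; [exact Ha|exact Ha|]. auto. Qed.

Lemma deriv_mono {P} (X Y : form P -> Prop) f :
  (forall g, X g -> Y g) -> deriv X f -> deriv Y f.
Proof. intros H [l [Hl T]]. exists l. split; auto. Qed.

Lemma deduction {P} (X : form P -> Prop) g f :
  deriv (fun h => X h \/ h = g) f -> deriv X (Imp g f).
Proof.
  intros [l [Hl T]].
  assert (E : exists l', (forall h, In h l' -> X h) /\ (forall h, In h l -> In h l' \/ h = g)).
  { clear T. induction l as [|h l IH].
    - exists []. split; [intros _ []|intros _ []].
    - destruct IH as [l' [A B]]. intros; apply Hl; simpl; auto.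
      destruct (Hl h (or_introl eq_refl)) as [Xh|Eh].
      + exists (h :: l'). split. intros k [<-|Hk]; auto.
        intros k [<-|Hk]; [left; left; auto|]. destruct (B k Hk); auto. left; right; auto.
      + exists l'. split; auto. intros k [<-|Hk]; auto. }
  destruct E as [l' [A B]]. exists l'. split; auto.
  eapply thm_taut1; [exact T|]. intros v Hv. apply teval_fold. intros Hall.
  rewrite teval_fold in Hv. unfold Imp; simpl.
  destruct (teval v g) eqn:Eg; simpl; [|reflexivity].
  rewrite Hv; [reflexivity|]. intros k Hk. destruct (B k Hk) as [H| ->]; auto.
Qed.


Definition sv {P S} (M : model P S) (s : S) (g : form P) : bool :=
  if excluded_middle_informative (sat M s g) then true else false.

Lemma sv_teval {P S} (M : model P S) s f : teval (sv M s) f = true <-> sat M s f.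
Proof.
  induction f as [p|a IH|a IHa b IHb|a IH]; simpl.
  - unfold sv; destruct excluded_middle_informative; simpl; split; auto; discriminate.
  - rewrite negb_true_iff. rewrite <- IH. destruct (teval _ a); split; auto; try discriminate.
    intros H; exfalso; auto.
  - rewrite andb_true_iff, IHa, IHb; tauto.
  - unfold sv; destruct excluded_middle_informative as [H|H]; simpl; split; auto; try discriminate.
Qed.

Lemma sat_imp {P S} (M : model P S) s a b : sat M s (Imp a b) <-> (sat M s a -> sat M s b).
Proof. simpl. split; [intros H Ha; apply NNPP; intros Hb; auto | intros H [Ha Hb]; auto]. Qed.

Lemma sat_or {P S} (M : model P S) s a b : sat M s (Or a b) <-> (sat M s a \/ sat M s b).
Proof. simpl. split; [intros H; apply NNPP; intros Hn; apply H; split; intros Hx; apply Hn; auto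
  | intros [Ha|Hb] [Hna Hnb]; auto]. Qed.

Lemma soundness_thm {P} (f : form P) : Thm f -> forall S (M : model P S) s, sat M s f.
Proof.
  induction 1; intros S M s.
  - apply sv_teval. apply H.
  - apply sat_imp. intros [[Ha|Ha] [Hb|Hb]]; split; simpl.
    + left; intros t Ht; split; auto.
    + left; intros t Ht; apply sat_or; left; auto.
    + right; intros u Hu [_ Hbu]; eapply Hb; eauto.
    + left; intros t Ht; apply sat_or; left; auto.
    + right; intros u Hu [Hau _]; eapply Ha; eauto.
    + left; intros t Ht; apply sat_or; right; auto.
    + right; intros u Hu [Hau _]; eapply Ha; eauto.
    + right; intros u Hu H'; apply sat_or in H'; destruct H' as [H'|H']; [eapply Ha|eapply Hb]; eauto.
  - apply sat_imp. intros [Ha|Ha]; apply sat_or.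
    + left. left. intros t Ht. apply sat_or. left; auto.
    + right. right. intros u Hu [H' _]. eapply Ha; eauto.
  - apply (proj1 (sat_imp M s a b) (IHThm1 S M s)), IHThm2.
  - split; simpl.
    + left; intros; auto.
    + right; intros u _ Hn; apply Hn; auto.
  - assert (E : forall t, sat M t a <-> sat M t b).
    { intros t. specialize (IHThm S M t). destruct IHThm as [H1 H2].
      rewrite sat_imp in H1, H2. tauto. }
    split; apply sat_imp; simpl; intros [Hx|Hx].
    + left; intros t Ht; apply E; auto.
    + right; intros u Hu Hb; apply (Hx u Hu); apply E; auto.
    + left; intros t Ht; apply E; auto.
    + right; intros u Hu Hb; apply (Hx u Hu); apply E; auto.
Qed.

Lemma soundness {P} (Gamma : form P -> Prop) f : deriv Gamma f -> serial_consequence Gamma f.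
Proof.
  intros [l [Hl T]] S M _ _ s HG.
  pose proof (soundness_thm T M s) as H. clear T.
  induction l as [|h l IH]; simpl in *; auto.
  apply IH; [intros; apply Hl; auto|].
  apply (proj1 (sat_imp M s _ _) H). apply HG, Hl; auto.
Qed.


Definition sub {A} (X Y : A -> Prop) := forall a, X a -> Y a.
Definition sup {A} (X0 : A -> Prop) (Fam : (A -> Prop) -> Prop) : A -> Prop :=
  fun a => X0 a \/ exists X, Fam X /\ X a.

Inductive tower {A} (X0 : A -> Prop) (f : (A -> Prop) -> A -> Prop) : (A -> Prop) -> Prop :=
| Tw0 : tower X0 f X0
| Twf : forall X, tower X0 f X -> tower X0 f (f X)
| Twu : forall Fam, (forall X, Fam X -> tower X0 f X) -> tower X0 f (sup X0 Fam).

Lemma set_ext {A} (X Y : A -> Prop) : sub X Y -> sub Y X -> X = Y.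
Proof.
  intros H1 H2. apply functional_extensionality. intros a.
  apply propositional_extensionality. split; auto.
Qed.

Lemma tower_base {A} X0 (f : (A -> Prop) -> A -> Prop) (finf : forall X, sub X (f X)) :
  forall X, tower X0 f X -> sub X0 X.
Proof.
  induction 1; intros a Ha; auto. apply finf; auto. left; auto.
Qed.

Definition extreme {A} X0 (f : (A -> Prop) -> A -> Prop) c :=
  forall x, tower X0 f x -> sub x c -> x = c \/ sub (f x) c.

Lemma lemma1 {A} X0 (f : (A -> Prop) -> A -> Prop) (finf : forall X, sub X (f X)) c :
  tower X0 f c -> extreme X0 f c -> forall x, tower X0 f x -> sub x c \/ sub (f c) x.
Proof.
  intros Tc Ec. pose proof (tower_base finf Tc) as Bc.
  induction 1 as [|x Tx IH|Fam HF IH].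
  - left. auto.
  - destruct IH as [H|H].
    + destruct (Ec x Tx H) as [->|H2]; [right; intros a Ha; auto|left; auto].
    + right. intros a Ha. apply finf; auto.
  - destruct (classic (exists Y, Fam Y /\ sub (f c) Y)) as [[Y [FY HY]]|Hn].
    + right. intros a Ha. right. exists Y; auto.
    + left. intros a [Ha|[Y [FY HY]]]; [auto|].
      destruct (IH Y FY) as [H|H]; auto. exfalso; apply Hn; eauto.
Qed.

Lemma lemma2 {A} X0 (f : (A -> Prop) -> A -> Prop) (finf : forall X, sub X (f X)) :
  forall c, tower X0 f c -> extreme X0 f c.
Proof.
  induction 1 as [|c Tc IH|Fam HF IH]; intros x Tx Hx.
  - left. apply set_ext; auto. apply (tower_base finf Tx).
  - destruct (lemma1 finf Tc IH Tx) as [H|H].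
    + destruct (IH x Tx H) as [->|H2].
      * right. intros a Ha; auto.
      * right. intros a Ha. apply finf; auto.
    + left. apply set_ext; auto.
  - destruct (classic (exists Y, Fam Y /\ ~ sub Y x)) as [[Y [FY HY]]|Hn].
    + destruct (lemma1 finf (HF Y FY) (IH Y FY) Tx) as [H|H].
      * destruct (IH Y FY x Tx H) as [E|H2].
        -- exfalso. apply HY. rewrite E. intros a Ha; auto.
        -- right. intros a Ha. right. exists Y; auto.
      * exfalso. apply HY. intros a Ha. apply H, finf, Ha.
    + left. apply set_ext; auto. intros a [Ha|[Y [FY HY]]].
      * apply (tower_base finf Tx); auto.
      * apply NNPP. intros Hxa. apply Hn. exists Y. split; auto.
Qed.

Lemma tower_chain {A} X0 (f : (A -> Prop) -> A -> Prop) (finf : forall X, sub X (f X)) x y :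
  tower X0 f x -> tower X0 f y -> sub x y \/ sub y x.
Proof.
  intros Tx Ty. destruct (lemma1 finf Ty (lemma2 finf Ty) Tx) as [H|H]; auto.
  right. intros a Ha. apply H, finf, Ha.
Qed.

Lemma tower_list {A} X0 (f : (A -> Prop) -> A -> Prop) (finf : forall X, sub X (f X)) Fam :
  (forall X, Fam X -> tower X0 f X) -> forall l : list A, (forall a, In a l -> sup X0 Fam a) ->
  (forall a, In a l -> X0 a) \/ exists Y, Fam Y /\ forall a, In a l -> Y a.
Proof.
  intros HF. induction l as [|x l IH]; intros Hl.
  - left. intros _ [].
  - destruct IH as [H|[Y [FY HY]]]; [intros; apply Hl; simpl; auto|..];
    destruct (Hl x (or_introl eq_refl)) as [Hx|[Z [FZ HZ]]].
    + left. intros a [<-|Ha]; auto.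
    + right. exists Z. split; auto. intros a [<-|Ha]; auto. apply (tower_base finf (HF Z FZ)); auto.
    + right. exists Y. split; auto. intros a [<-|Ha]; auto. apply (tower_base finf (HF Y FY)); auto.
    + destruct (tower_chain finf (HF Y FY) (HF Z FZ)) as [H|H].
      * right. exists Z. split; auto. intros a [<-|Ha]; auto.
      * right. exists Y. split; auto. intros a [<-|Ha]; auto.
Qed.


Definition bot {P} (p0 : P) : form P := And (Var p0) (Neg (Var p0)).
Definition consis {P} (p0 : P) (X : form P -> Prop) := ~ deriv X (bot p0).
Definition add {P} (X : form P -> Prop) g := fun h => X h \/ h = g.
Definition MCS {P} (p0 : P) (X : form P -> Prop) :=
  consis p0 X /\ forall g, X g \/ ~ consis p0 (add X g).

Definition extf {P} (p0 : P) (X : form P -> Prop) : form P -> Prop :=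
  match excluded_middle_informative (exists g, ~ X g /\ consis p0 (add X g)) with
  | left H => add X (proj1_sig (constructive_indefinite_description _ H))
  | right _ => X
  end.

Lemma extf_inf {P} (p0 : P) X : sub X (extf p0 X).
Proof. unfold extf; destruct excluded_middle_informative; intros a Ha; [left|]; auto. Qed.

Lemma extf_cons {P} (p0 : P) X : consis p0 X -> consis p0 (extf p0 X).
Proof.
  unfold extf; destruct excluded_middle_informative as [H|H]; auto.
  intros _; exact (proj2 (proj2_sig (constructive_indefinite_description _ H))).
Qed.

Lemma extf_fix {P} (p0 : P) X : sub (extf p0 X) X -> forall g, X g \/ ~ consis p0 (add X g).
Proof.
  unfold extf; destruct excluded_middle_informative as [H|H]; intros Hs g.
  - pose proof (proj1 (proj2_sig (constructive_indefinite_description _ H))) as Hg'.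
    exfalso. apply Hg', Hs. right; reflexivity.
  - destruct (classic (X g)); auto. right. intros Hc. apply H. eauto.
Qed.

Lemma lindenbaum {P} (p0 : P) X0 : consis p0 X0 -> exists M, MCS p0 M /\ sub X0 M.
Proof.
  intros H0.
  assert (Tc : forall X, tower X0 (extf p0) X -> consis p0 X).
  { induction 1 as [|X TX IH|Fam HF IH]; auto.
    - apply extf_cons; auto.
    - intros [l [Hl T]].
      destruct (tower_list (extf_inf p0) HF l Hl) as [H|[Y [FY HY]]].
      + apply H0. exists l; auto.
      + apply (IH Y FY). exists l; auto. }
  set (M := sup X0 (tower X0 (extf p0))).
  assert (TM : tower X0 (extf p0) M) by (apply Twu; auto).
  exists M. split; [split|].
  - apply Tc, TM.
  - apply extf_fix. intros a Ha. right. exists (extf p0 M). split; auto. apply Twf, TM.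
  - intros a Ha. left; auto.
Qed.

Ltac bdes :=
  unfold Imp, Or, Iff, bot in *; simpl in *;
  repeat (match goal with
   | v : form ?P -> bool |- _ =>
     match goal with
     | H : context [teval v ?y] |- _ => destruct (teval v y)
     | |- context [teval v ?y] => destruct (teval v y)
     | H : context [v ?y] |- _ => destruct (v y)
     | |- context [v ?y] => destruct (v y)
     end
   end; simpl in *); try discriminate; auto.

Lemma mcs_deriv {P} (p0 : P) X f : MCS p0 X -> deriv X f -> X f.
Proof.
  intros [Hc Hm] Hd. destruct (Hm f) as [H|H]; auto. exfalso. apply Hc.
  apply NNPP in H. apply deduction in H.
  eapply deriv_taut2; [exact Hd|exact H|]. intros v A B. unfold Imp in B; simpl in B.
  bdes.
Qed.

Lemma mcs_thm {P} (p0 : P) X f : MCS p0 X -> Thm f -> X f.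
Proof. intros H T. apply (mcs_deriv H), deriv_thm, T. Qed.

Lemma mcs_neg {P} (p0 : P) X f : MCS p0 X -> (X (Neg f) <-> ~ X f).
Proof.
  intros HM. pose proof HM as [Hc Hm]. split.
  - intros Hn Hf. apply Hc. eapply deriv_taut2; [apply deriv_in, Hn|apply deriv_in, Hf|].
    intros v A B. bdes.
  - intros Hf. destruct (Hm (Neg f)) as [H|H]; auto. exfalso.
    destruct (Hm f) as [H'|H']; [auto|].
    apply NNPP in H. apply NNPP in H'. apply deduction in H. apply deduction in H'.
    apply Hc. eapply deriv_taut2; [exact H|exact H'|].
    intros v A B. bdes.
Qed.

Lemma mcs_and {P} (p0 : P) X a b : MCS p0 X -> (X (And a b) <-> X a /\ X b).
Proof.
  intros HM. split.
  - intros H. split; apply (mcs_deriv HM); eapply deriv_taut1; try apply deriv_in, H;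
    intros v A; bdes.
  - intros [Ha Hb]. apply (mcs_deriv HM). eapply deriv_taut2; [apply deriv_in, Ha|apply deriv_in, Hb|].
    intros v A B; bdes.
Qed.

Lemma mcs_mp {P} (p0 : P) X a b : MCS p0 X -> X (Imp a b) -> X a -> X b.
Proof.
  intros HM H1 H2. apply (mcs_deriv HM). eapply deriv_taut2; [apply deriv_in, H1|apply deriv_in, H2|].
  intros v A B. bdes.
Qed.



Lemma mcs_or {P} (p0 : P) X a b : MCS p0 X -> X (Or a b) -> X a \/ X b.
Proof.
  intros HM H. unfold Or in H. rewrite (mcs_neg _ HM), (mcs_and _ _ HM), !(mcs_neg _ HM) in H.
  apply NNPP. intros Hn. apply H. split; intros Hx; apply Hn; auto.
Qed.

Lemma box_re {P} {p0 : P} {G} {a b c : form P} : MCS p0 G -> Thm c ->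
  (forall v, teval v c = true -> teval v (Iff a b) = true) -> G (Box a) -> G (Box b).
Proof.
  intros HM Tc H Ha. assert (T : Thm (Iff a b)) by (eapply thm_taut1; [exact Tc|exact H]).
  apply R_E in T. apply (mcs_thm HM) in T. unfold Iff in T. apply (mcs_and _ _ HM) in T.
  destruct T as [T _]. apply (mcs_mp _ _ HM T Ha).
Qed.

Lemma box_ret {P} {p0 : P} {G} {a b : form P} : MCS p0 G ->
  (forall v, teval v (Iff a b) = true) -> G (Box a) -> G (Box b).
Proof.
  intros HM H. apply (@box_re P p0 G a b (Iff a b)); auto. apply Ax_taut; exact H.
Qed.

Lemma box_thm {P} {p0 : P} {G} {a : form P} : MCS p0 G -> Thm a -> G (Box a) /\ G (Box (Neg a)).
Proof. intros HM T. apply (mcs_and _ _ HM). apply (mcs_thm HM). apply R_N, T. Qed.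

Lemma box_con {P} {p0 : P} {G} {a b : form P} : MCS p0 G -> G (Box a) -> G (Box b) ->
  G (Box (And a b)) /\ G (Box (Or a b)).
Proof.
  intros HM Ha Hb. apply (mcs_and _ _ HM). eapply (mcs_mp _ _ HM). apply (mcs_thm HM), Ax_CON.
  apply (mcs_and _ _ HM); auto.
Qed.

Lemma box_dis {P} {p0 : P} {G} {a b c : form P} : MCS p0 G -> G (Box a) ->
  G (Box (Or a b)) \/ G (Box (And a c)).
Proof.
  intros HM Ha. apply (mcs_or _ _ HM). eapply (mcs_mp _ _ HM). apply (mcs_thm HM), Ax_DIS. auto.
Qed.

Definition FF {P} (G : form P -> Prop) (a : form P) := forall psi, G (Box (Or a psi)).
Definition II {P} (G : form P -> Prop) (a : form P) := forall chi, G (Box (And a chi)).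
Definition AB {P} (G : form P -> Prop) := forall psi, G (Box psi).

Lemma FF_up {P} {p0 : P} {G} {a b : form P} : MCS p0 G -> FF G a -> Thm (Imp a b) -> FF G b.
Proof.
  intros HM Ha T psi. specialize (Ha (Or b psi)).
  eapply (box_re HM T); [|exact Ha]. intros v H. bdes.
Qed.

Lemma FF_and {P} {p0 : P} {G} {a b : form P} : MCS p0 G -> FF G a -> FF G b -> FF G (And a b).
Proof.
  intros HM Ha Hb psi. destruct (box_con HM (Ha psi) (Hb psi)) as [H _].
  eapply (box_ret HM); [|exact H]. intros v; bdes.
Qed.

Lemma FF_thm {P} {p0 : P} {G} {a : form P} : MCS p0 G -> Thm a -> FF G a.
Proof.
  intros HM T psi. assert (T2 : Thm (Or a psi)) by (eapply thm_taut1; [exact T|]; intros v H; bdes). apply (proj1 (box_thm HM T2)).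
Qed.

Lemma FF_list {P} (p0 : P) G : MCS p0 G -> forall l, (forall g, In g l -> FF G g) ->
  forall th, Thm (fold_right (@Imp P) th l) -> FF G th.
Proof.
  intros HM l. induction l as [|g l IH]; intros Hl th T; simpl in T.
  - apply (FF_thm HM T).
  - assert (T' : Thm (fold_right (@Imp P) (Imp g th) l)).
    { eapply thm_taut1; [exact T|]. intros v H. apply teval_fold. intros Hall.
      unfold Imp in H |- *; simpl in *. destruct (teval v g); simpl in *; auto.
      rewrite negb_true_iff, negb_false_iff in H. rewrite (proj1 (teval_fold _ _ _) H Hall). auto. }
    pose proof (IH (fun h Hh => Hl h (or_intror Hh)) _ T') as H1.
    pose proof (FF_and HM (Hl g (or_introl eq_refl)) H1) as H2.
    eapply (FF_up HM H2). apply Ax_taut. intros v; bdes.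
Qed.

Lemma II_down {P} {p0 : P} {G} {a b : form P} : MCS p0 G -> II G a -> Thm (Imp b a) -> II G b.
Proof.
  intros HM Ha T chi. specialize (Ha (And b chi)).
  eapply (box_re HM T); [|exact Ha]. intros v H. bdes.
Qed.

Lemma II_or {P} {p0 : P} {G} {a b : form P} : MCS p0 G -> II G a -> II G b -> II G (Or a b).
Proof.
  intros HM Ha Hb chi. destruct (box_con HM (Ha chi) (Hb chi)) as [_ H].
  eapply (box_ret HM); [|exact H]. intros v; bdes.
Qed.

Lemma II_thm {P} {p0 : P} {G} {a : form P} : MCS p0 G -> Thm (Neg a) -> II G a.
Proof.
  intros HM T chi.
  assert (T' : Thm (Neg (And a chi))) by (eapply thm_taut1; [exact T|]; intros v H; bdes).
  destruct (box_thm HM T') as [_ H]. eapply (box_ret HM); [|exact H]. intros v; bdes.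
Qed.

Definition NegI {P} (G : form P -> Prop) (h : form P) := exists i, II G i /\ h = Neg i.

Lemma II_list {P} (p0 : P) G : MCS p0 G -> forall l, (forall g, In g l -> NegI G g) ->
  forall th, Thm (fold_right (@Imp P) (Neg th) l) -> II G th.
Proof.
  intros HM l. induction l as [|g l IH]; intros Hl th T; simpl in T.
  - apply (II_thm HM T).
  - destruct (Hl g (or_introl eq_refl)) as [i [Hi ->]].
    assert (T' : Thm (fold_right (@Imp P) (Neg (And th (Neg i))) l)).
    { eapply thm_taut1; [exact T|]. intros v H. apply teval_fold. intros Hall.
      unfold Imp in H; simpl in *. destruct (teval v i) eqn:Ei; simpl in *.
      - rewrite andb_false_r. reflexivity.
      - rewrite negb_true_iff, negb_false_iff in H.
        pose proof (proj1 (teval_fold _ _ _) H Hall) as H3. simpl in H3. rewrite negb_true_iff in H3. rewrite H3. auto. }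
    pose proof (IH (fun h Hh => Hl h (or_intror Hh)) _ T') as H1.
    pose proof (II_or HM Hi H1) as H2.
    eapply (II_down HM H2). apply Ax_taut. intros v; bdes.
Qed.



Lemma deriv_FF {P} (p0 : P) G th : MCS p0 G -> deriv (FF G) th -> FF G th.
Proof. intros HM [l [Hl T]]. exact (FF_list HM l Hl th T). Qed.

Lemma deriv_II {P} (p0 : P) G th : MCS p0 G -> deriv (NegI G) (Neg th) -> II G th.
Proof. intros HM [l [Hl T]]. exact (II_list HM l Hl th T). Qed.

Lemma FF_box {P} (p0 : P) G a : MCS p0 G -> FF G a -> G (Box a).
Proof. intros HM H. eapply (box_ret HM); [|exact (H a)]. intros v; bdes. Qed.

Lemma II_box {P} (p0 : P) G a : MCS p0 G -> II G a -> G (Box a).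
Proof. intros HM H. eapply (box_ret HM); [|exact (H a)]. intros v; bdes. Qed.

Lemma box_split {P} (p0 : P) G a : MCS p0 G -> G (Box a) -> FF G a \/ II G a.
Proof.
  intros HM Ha. destruct (classic (FF G a)) as [H|H]; auto. right.
  apply not_all_ex_not in H. destruct H as [psi Hpsi]. intros chi.
  destruct (box_dis (b:=psi) (c:=chi) HM Ha) as [H|H]; [contradiction|auto].
Qed.

Lemma FF_bot {P} (p0 : P) G : MCS p0 G -> FF G (bot p0) -> AB G.
Proof. intros HM H psi. eapply (box_ret HM); [|exact (H psi)]. intros v; bdes. Qed.

Lemma II_top {P} (p0 : P) G : MCS p0 G -> II G (Neg (bot p0)) -> AB G.
Proof. intros HM H psi. eapply (box_ret HM); [|exact (H psi)]. intros v; bdes. Qed.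

Definition St {P} (p0 : P) := {X : form P -> Prop | MCS p0 X}.

Definition Mc {P} (p0 : P) : model P (St p0) :=
  Model (fun s t => (AB (proj1_sig s) /\ forall f, proj1_sig t f <-> proj1_sig s f) \/
                    (~ AB (proj1_sig s) /\ forall f, FF (proj1_sig s) f -> proj1_sig t f))
        (fun s t => (AB (proj1_sig s) /\ forall f, proj1_sig t f <-> proj1_sig s f) \/
                    (~ AB (proj1_sig s) /\ forall f, II (proj1_sig s) f -> ~ proj1_sig t f))
        (fun p s => proj1_sig s (Var p)).

Lemma truth {P} (p0 : P) f : forall s : St p0, sat (Mc p0) s f <-> proj1_sig s f.
Proof.
  induction f as [p|a IH|a IHa b IHb|a IH]; intros [G HM]; simpl in *.
  - tauto.
  - rewrite IH. simpl. symmetry. apply (mcs_neg _ HM).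
  - rewrite IHa, IHb. simpl. symmetry. apply (mcs_and _ _ HM).
  - split.
    + intros [H|H].
      * destruct (classic (AB G)) as [Hab|Hab]; [apply Hab|].
        apply NNPP. intros Hn.
        assert (Hc : consis p0 (add (FF G) (Neg a))).
        { intros Hd. apply deduction in Hd. apply Hn. apply (FF_box HM). apply (deriv_FF HM).
          eapply deriv_taut1; [exact Hd|]. intros v; bdes. }
        destruct (lindenbaum Hc) as [T [HT HsT]].
        assert (Ta : T a).
        { apply (IH (exist _ T HT)). apply H. simpl. right. split; auto.
          intros f Hf. apply HsT. left; auto. }
        apply (proj1 (mcs_neg _ HT) (HsT (Neg a) (or_intror eq_refl))). exact Ta.
      * destruct (classic (AB G)) as [Hab|Hab]; [apply Hab|].
        apply NNPP. intros Hn.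
        assert (Hc : consis p0 (add (NegI G) a)).
        { intros Hd. apply deduction in Hd. apply Hn. apply (II_box HM). apply (deriv_II HM).
          eapply deriv_taut1; [exact Hd|]. intros v; bdes. }
        destruct (lindenbaum Hc) as [T [HT HsT]].
        apply (H (exist _ T HT)).
        -- simpl. right. split; auto. intros f Hf Tf.
           apply (proj1 (mcs_neg _ HT) (HsT (Neg f) (or_introl (ex_intro _ f (conj Hf eq_refl))))).
           exact Tf.
        -- apply (IH (exist _ T HT)). apply HsT. right; reflexivity.
    + intros Ha. destruct (classic (AB G)) as [Hab|Hab].
      * destruct (classic (G a)) as [Hg|Hg].
        -- left. intros [T HT] [[_ E]|[Hn _]]; [|contradiction].
           apply (IH (exist _ T HT)). simpl in *. apply E; auto.
        -- right. intros [T HT] [[_ E]|[Hn _]]; [|contradiction]. intros Hs.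
           apply (IH (exist _ T HT)) in Hs. simpl in *. apply Hg, E, Hs.
      * destruct (box_split a HM Ha) as [H|H].
        -- left. intros [T HT] [[Hn _]|[_ E]]; [contradiction|].
           apply (IH (exist _ T HT)). simpl in *. apply E; auto.
        -- right. intros [T HT] [[Hn _]|[_ E]]; [contradiction|]. intros Hs.
           apply (IH (exist _ T HT)) in Hs. simpl in *. apply (E a H Hs).
Qed.

Lemma serial1 {P} (p0 : P) : serial (R1 (Mc p0)).
Proof.
  intros [G HM]. simpl. destruct (classic (AB G)) as [Hab|Hab].
  - exists (exist _ G HM). left. simpl. split; auto. tauto.
  - assert (Hc : consis p0 (FF G)).
    { intros Hd. apply Hab. apply (FF_bot HM). apply (deriv_FF HM Hd). }
    destruct (lindenbaum Hc) as [T [HT HsT]]. exists (exist _ T HT). right. simpl. split; auto.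
Qed.

Lemma serial2 {P} (p0 : P) : serial (R2 (Mc p0)).
Proof.
  intros [G HM]. simpl. destruct (classic (AB G)) as [Hab|Hab].
  - exists (exist _ G HM). left. simpl. split; auto. tauto.
  - assert (Hc : consis p0 (NegI G)).
    { intros Hd. apply Hab. apply (II_top HM). apply (deriv_II HM).
      eapply deriv_taut1; [exact Hd|]. intros v; bdes. }
    destruct (lindenbaum Hc) as [T [HT HsT]]. exists (exist _ T HT). right. simpl. split; auto.
    intros f Hf Tf. apply (proj1 (mcs_neg _ HT) (HsT (Neg f) (ex_intro _ f (conj Hf eq_refl)))). exact Tf.
Qed.

Lemma completeness {P} (p0 : P) (Gamma : form P -> Prop) phi :
  serial_consequence Gamma phi -> deriv Gamma phi.
Proof.
  intros H. apply NNPP. intros Hn.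
  assert (Hc : consis p0 (add Gamma (Neg phi))).
  { intros Hd. apply deduction in Hd. apply Hn. eapply deriv_taut1; [exact Hd|]. intros v; bdes. }
  destruct (lindenbaum Hc) as [T [HT HsT]].
  specialize (H _ (Mc p0) (serial1 (p0:=p0)) (serial2 (p0:=p0)) (exist _ T HT)).
  assert (Tp : T phi).
  { apply (truth phi (exist _ T HT)). apply H. intros g Hg.
    apply (truth g (exist _ T HT)). apply HsT. left; auto. }
  apply (proj1 (mcs_neg _ HT) (HsT (Neg phi) (or_intror eq_refl))). exact Tp.
Qed.


Theorem theorem6 (P : Type) (HP : inhabited P)
  (Gamma : form P -> Prop) (phi : form P) :
  deriv Gamma phi <-> serial_consequence Gamma phi.
Proof.
  destruct HP as [p0]. split.
  - apply soundness.
  - apply (completeness p0).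
Qed.
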